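(* Let $F$ be an Archimedean vector lattice and $H\subset F$ an ideal. The following are equivalent: (i) $H$ is a projection band; (ii) every subset $G\subset H$ which is order bounded in $F$ is order bounded in $H$; (iii) the inclusion operator from $H$ into $F$ is an order embedding.
   Context: An ideal $H$ is a projection band if $F=H+H^d$, where $H^d=\{f\in F: |f|\wedge|h|=0\ \forall h\in H\}$. A net $(f_\alpha)$ in a vector lattice order converges to $f$ if there is a set $G$ with $\bigwedge G=0$ such that for every $g\in G$ there is $\alpha_0$ with $|f_\alpha-f|\le g$ for $\alpha\ge\alpha_0$. The inclusion of a sublattice $E$ into $F$ is an order embedding if for nets in $E$ and points of $E$, order convergence in $E$ (with respect to the order structure of $E$) is equivalent to order convergence in $F$. *)

(* Defs.v *)
From mathcomp Require Import all_boot all_algebra.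
From mathcomp Require Import boolp classical_sets reals.
Set Implicit Arguments. Unset Strict Implicit. Unset Printing Implicit Defensive.
Import GRing.Theory Num.Theory.
Local Open Scope ring_scope.
Local Open Scope classical_set_scope.

Section VL.
Variables (R : realType) (V : lmodType R) (le : V -> V -> Prop) (join : V -> V -> V).

Definition vector_lattice : Prop :=
  [/\ (forall x, le x x),
      (forall x y, le x y -> le y x -> x = y) /\
      (forall x y z, le x y -> le y z -> le x z),
      (forall x y z, le x y -> le (x + z) (y + z)),
      (forall (a : R) x y, 0 <= a -> le x y -> le (a *: x) (a *: y)) &
      (forall x y, [/\ le x (join x y), le y (join x y) &
                      forall z, le x z -> le y z -> le (join x y) z])].

Definition meet (x y : V) : V := - join (- x) (- y).
Definition vabs (x : V) : V := join x (- x).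

Definition archimedean : Prop :=
  forall x y, le 0 x -> (forall n : nat, le (n%:R *: x) y) -> x = 0.

Definition ideal (H : set V) : Prop :=
  [/\ H 0,
      (forall x y, H x -> H y -> H (x + y)),
      (forall (a : R) x, H x -> H (a *: x)) &
      (forall f h, H h -> le (vabs f) (vabs h) -> H f)].

Definition disj_compl (H : set V) : set V :=
  [set f | forall h, H h -> meet (vabs f) (vabs h) = 0].

Definition projection_band (H : set V) : Prop :=
  forall f, exists h, exists g, [/\ H h, disj_compl H g & f = h + g].

Definition order_bounded_in (E G : set V) : Prop :=
  exists a, exists b, [/\ E a, E b & forall g, G g -> le a g /\ le g b].

Definition inf_in (E G : set V) (m : V) : Prop :=
  [/\ E m, (forall g, G g -> le m g) &
      (forall x, E x -> (forall g, G g -> le x g) -> le x m)].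

Definition directed (D : Type) (leD : D -> D -> Prop) : Prop :=
  [/\ (exists d : D, True), (forall a, leD a a),
      (forall a b c, leD a b -> leD b c -> leD a c) &
      (forall a b, exists c, leD a c /\ leD b c)].

Definition order_conv_in (E : set V) (D : Type) (leD : D -> D -> Prop)
    (x : D -> V) (f : V) : Prop :=
  exists G : set V, [/\ G `<=` E, inf_in E G 0 &
    forall g, G g -> exists a0, forall a, leD a0 a -> le (vabs (x a - f)) g].

Definition order_embedding (E : set V) : Prop :=
  forall (D : Type) (leD : D -> D -> Prop), directed leD ->
  forall (x : D -> V) (f : V), (forall a, E (x a)) -> E f ->
    (order_conv_in E leD x f <-> order_conv_in setT leD x f).

End VL.

(* Main.v *)
Require Import Defs.
From mathcomp Require Import all_boot all_algebra.
From mathcomp Require Import boolp classical_sets reals.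
Local Open Scope classical_set_scope.

Import GRing.Theory Num.Theory.

Set Implicit Arguments.
Section Aux.
Variables (R : realType) (V : lmodType R) (le : V -> V -> Prop) (join : V -> V -> V).
Hypothesis hVL : vector_lattice le join.

Local Open Scope ring_scope.
Local Notation vabs := (Defs.vabs join).
Local Notation meet := (Defs.meet join).

Lemma lrefl x : le x x. Proof. by case: hVL => r _ _ _ _; apply: r. Qed.
Lemma lanti x y : le x y -> le y x -> x = y. Proof. by case: hVL => _ [a _] _ _ _; apply: a. Qed.
Lemma ltrans x y z : le x y -> le y z -> le x z. Proof. by case: hVL => _ [_ t] _ _ _; apply: t. Qed.
Lemma laddr x y z : le x y -> le (x + z) (y + z). Proof. by case: hVL => _ _ a _ _; apply: a. Qed.
Lemma lscale (a : R) x y : 0 <= a -> le x y -> le (a *: x) (a *: y).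
Proof. by case: hVL => _ _ _ s _; apply: s. Qed.
Lemma join_ubl x y : le x (join x y). Proof. by case: hVL => _ _ _ _ j; case: (j x y). Qed.
Lemma join_ubr x y : le y (join x y). Proof. by case: hVL => _ _ _ _ j; case: (j x y). Qed.
Lemma join_lub x y z : le x z -> le y z -> le (join x y) z.
Proof. by case: hVL => _ _ _ _ j; case: (j x y) => _ _; apply. Qed.

Lemma laddl x y z : le x y -> le (z + x) (z + y).
Proof. by move=> h; rewrite ![z + _]addrC; apply: laddr. Qed.
Lemma ladd2 a b c d : le a b -> le c d -> le (a + c) (b + d).
Proof. move=> h1 h2; apply: ltrans (laddr c h1) (laddl b h2). Qed.
Lemma lopp x y : le x y -> le (- y) (- x).
Proof.
move=> h; have := laddr (- x - y) h.
by rewrite addrA subrr add0r addrC addrNK.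
Qed.
Lemma lsub0 x y : le x y -> le 0 (y - x).
Proof. by move=> h; have := laddr (- x) h; rewrite subrr. Qed.
Lemma lsub0' x y : le 0 (y - x) -> le x y.
Proof. by move=> h; have := laddr x h; rewrite add0r subrK. Qed.
Lemma lsubpos x y : le 0 y -> le (x - y) x.
Proof. by move=> h; have := laddl x (lopp h); rewrite oppr0 addr0. Qed.
Lemma lopp0 y : le 0 y -> le (- y) 0.
Proof. by move=> h; have := lopp h; rewrite oppr0. Qed.

Lemma vabs_ge x : le x (vabs x). Proof. exact: join_ubl. Qed.
Lemma vabs_geN x : le (- x) (vabs x). Proof. exact: join_ubr. Qed.
Lemma vabs_ge0 x : le 0 (vabs x).
Proof.
have h := ladd2 (vabs_ge x) (vabs_geN x).
rewrite subrr -mulr2n -scaler_nat in h.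
have := lscale ((2%:R : R)^-1) _ h.
rewrite scaler0 scalerA mulVf ?pnatr_eq0 // scale1r; apply.
by rewrite invr_ge0 ler0n.
Qed.
Lemma vabs_id x : le 0 x -> vabs x = x.
Proof.
move=> h; apply: lanti; last exact: vabs_ge.
apply: join_lub; first exact: lrefl.
exact: ltrans (lopp0 h) h.
Qed.
Lemma vabs_vabs x : vabs (vabs x) = vabs x.
Proof. exact: vabs_id (vabs_ge0 x). Qed.

Lemma meet_lbl x y : le (meet x y) x.
Proof. by have := lopp (join_ubl (- x) (- y)); rewrite opprK. Qed.
Lemma meet_lbr x y : le (meet x y) y.
Proof. by have := lopp (join_ubr (- x) (- y)); rewrite opprK. Qed.
Lemma meet_glb w x y : le w x -> le w y -> le w (meet x y).
Proof.
move=> h1 h2; have := lopp (join_lub (lopp h1) (lopp h2)).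
by rewrite opprK.
Qed.

Lemma lscale0 (a : R) x : 0 <= a -> le 0 x -> le 0 (a *: x).
Proof. by move=> ha hx; have := lscale a ha hx; rewrite scaler0. Qed.
Lemma lscale_coef (a b : R) x : le 0 x -> a <= b -> le (a *: x) (b *: x).
Proof.
move=> hx hab; apply: lsub0'; rewrite -scalerBl; apply: lscale0 => //.
by rewrite subr_ge0.
Qed.

Lemma vabs_sub_le x y : le 0 x -> le 0 y -> le (vabs (x - y)) (x + y).
Proof.
move=> hx hy; apply: join_lub.
  exact: laddl x (ltrans (lopp0 hy) hy).
rewrite opprB [x + y]addrC; exact: laddl y (ltrans (lopp0 hx) hx).
Qed.

Variable H : set V.
Hypothesis hH : ideal le join H.

Lemma H0 : H 0. Proof. by case: hH => h _ _ _. Qed.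
Lemma HD x y : H x -> H y -> H (x + y). Proof. by case: hH => _ h _ _; apply: h. Qed.
Lemma HZ (a : R) x : H x -> H (a *: x). Proof. by case: hH => _ _ h _; apply: h. Qed.
Lemma Hsol f h : H h -> le (vabs f) (vabs h) -> H f. Proof. by case: hH => _ _ _ s; apply: s. Qed.
Lemma HN x : H x -> H (- x). Proof. by move=> h; rewrite -scaleN1r; apply: HZ. Qed.
Lemma HB x y : H x -> H y -> H (x - y). Proof. by move=> h1 h2; apply: HD => //; apply: HN. Qed.
Lemma H_vabs x : H x -> H (vabs x).
Proof. by move=> h; apply: (Hsol h); rewrite vabs_vabs; apply: lrefl. Qed.
Lemma H_pos f h : H h -> le 0 f -> le f (vabs h) -> H f.
Proof. by move=> Hh f0 fh; apply: (Hsol Hh); rewrite vabs_id. Qed.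

Definition propii := forall G : set V, G `<=` H -> order_bounded_in le setT G ->
        order_bounded_in le H G.

Lemma i_ii : projection_band join H -> propii.
Proof.
move=> PB G GH [a [b [_ _ Gab]]].
set c := join (vabs a) (vabs b).
have [h [d [Hh Dd ce]]] := PB c.
suff kle : forall g, G g -> le (vabs g) (vabs h).
  exists (- vabs h), (vabs h); split; [exact: HN (H_vabs Hh) | exact: H_vabs Hh|].
  move=> g Gg; split; last exact: ltrans (vabs_ge g) (kle g Gg).
  by have := lopp (ltrans (vabs_geN g) (kle g Gg)); rewrite opprK.
move=> g Gg.
set k := vabs g.
have Hk : H k := H_vabs (GH _ Gg).
have kc : le k c.
  case: (Gab g Gg) => ag gb.
  apply: join_lub.
    exact: ltrans gb (ltrans (vabs_ge b) (join_ubr _ _)).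
  exact: ltrans (lopp ag) (ltrans (vabs_geN a) (join_ubl _ _)).
set w := join (k - vabs h) 0.
have w0 : le 0 w := join_ubr _ _.
have wk : le w k.
  apply: join_lub; first exact: lsubpos (vabs_ge0 _).
  exact: vabs_ge0.
have Hw : H w.
  by apply: (H_pos Hk w0); rewrite /k vabs_vabs.
have wd : le w (vabs d).
  apply: join_lub; last exact: vabs_ge0.
  have h1 : le k (vabs h + vabs d).
    apply: ltrans kc _; rewrite ce; exact: ladd2 (vabs_ge h) (vabs_ge d).
  by have := laddr (- vabs h) h1; rewrite (addrC (vabs h)) addrK.
have := meet_glb wd (vabs_ge w).
rewrite Dd // => w_le0.
have := laddr (vabs h) (ltrans (join_ubl _ _) w_le0).
by rewrite subrK add0r.
Qed.

Lemma ii_pos : propii -> forall c, le 0 c ->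
  exists m, [/\ H m, le m c & disj_compl join H (c - m)].
Proof.
move=> ii c c0.
pose S := [set h | H h /\ le 0 h /\ le h c].
have [l [u [_ Hu Su]]] : order_bounded_in le H S.
  apply: ii; first by move=> h [].
  exists 0, c; split => // g [_ [g0 gc]]; split => //.
have u0 : le 0 u := (Su 0 (conj H0 (conj (lrefl 0) c0))).2.
set m := meet u c.
have m0 : le 0 m := meet_glb u0 c0.
have Hm : H m := H_pos Hu m0 (ltrans (meet_lbl _ _) (vabs_ge u)).
have mc : le m c := meet_lbr _ _.
exists m; split => // k Hk.
set w := meet (vabs (c - m)) (vabs k).
have w0 : le 0 w := meet_glb (vabs_ge0 _) (vabs_ge0 _).
have Hw : H w.
  by apply: (H_pos (H_vabs Hk) w0); rewrite vabs_vabs; exact: meet_lbr.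
have Smw : S (m + w).
  split; first exact: HD.
  split; first by have := ladd2 m0 w0; rewrite addr0.
  have wcm : le w (c - m).
    by have := meet_lbl (vabs (c - m)) (vabs k); rewrite -/w (vabs_id (lsub0 mc)).
  by have := laddl m wcm; rewrite [m + (c - m)]addrC subrK.
have h1 : le (m + w) m := meet_glb (Su _ Smw).2 (Smw.2.2).
apply: lanti => //.
by have := laddr (- m) h1; rewrite subrr (addrC m) addrK.
Qed.

Lemma ii_i : propii -> projection_band join H.
Proof.
move=> ii f.
have c10 : le 0 (f + vabs f).
  by have := laddl f (vabs_geN f); rewrite subrr.
have [m1 [Hm1 m1c D1]] := ii_pos ii c10.
have [m2 [Hm2 m2c D2]] := ii_pos ii (vabs_ge0 f).
exists (m1 - m2), ((f + vabs f - m1) - (vabs f - m2)); split.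
- exact: HB.
- move=> k Hk.
  set d1 := f + vabs f - m1 in D1 *.
  set d2 := vabs f - m2 in D2 *.
  have d10 : le 0 d1 := lsub0 m1c.
  have d20 : le 0 d2 := lsub0 m2c.
  set w := meet (vabs (d1 - d2)) (vabs k).
  have w0 : le 0 w := meet_glb (vabs_ge0 _) (vabs_ge0 _).
  have Hw : H w.
    by apply: (H_pos (H_vabs Hk) w0); rewrite vabs_vabs; exact: meet_lbr.
  have e1 := D1 w Hw; have e2 := D2 w Hw.
  rewrite !vabs_id // in e1 e2.
  have wd : le w (d1 + d2) := ltrans (meet_lbl _ _) (vabs_sub_le d10 d20).
  have h1 : le (w - d2) (meet d1 w).
    apply: meet_glb; last exact: lsubpos.
    by have := laddr (- d2) wd; rewrite addrK.
  rewrite e1 in h1.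
  have h2 : le w d2 by have := laddr d2 h1; rewrite subrK add0r.
  have := meet_glb h2 (lrefl w); rewrite e2 => h3.
  exact: lanti.
- rewrite opprB (addrC (f + vabs f - m1)) addrA.
  have -> : m1 - m2 + (m2 - vabs f) = m1 - vabs f by rewrite addrA subrK.
  by rewrite addrC addrA subrK addrK.
Qed.

Lemma ii_iii : propii -> order_embedding le join H.
Proof.
move=> ii D leD dirD x f Hx Hf; split.
- move=> [G [GH infG ev]].
  case: (pselect (exists g, G g)) => [[g0 Gg0] | noG].
  + exists G; split => //.
    case: infG => _ lb glb; split => // y _ yl.
    have Hyp : H (join y 0).
      apply: (H_pos (GH _ Gg0) (join_ubr _ _)).
      exact: ltrans (join_lub (yl g0 Gg0) (lb g0 Gg0)) (vabs_ge _).
    have := glb _ Hyp (fun g Gg => join_lub (yl g Gg) (lb g Gg)).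
    exact: ltrans (join_ubl _ _).
  + have Htriv : forall z, H z -> z = 0.
      case: infG => _ _ glb z Hz.
      have lbH : forall z, H z -> le z 0.
        move=> z' Hz'; apply: glb => // g Gg; exfalso; apply: noG; by exists g.
      apply: lanti; first exact: lbH.
      by have := lopp (lbH _ (HN Hz)); rewrite opprK oppr0.
    exists [set 0]; split => //.
      split => //; first by move=> g ->; apply: lrefl.
      by move=> y _ yl; apply: yl.
    move=> g ->; case: dirD => [[d0 _] _ _ _]; exists d0 => a _.
    rewrite (Htriv _ (Hx a)) (Htriv _ Hf) subrr vabs_id; exact: lrefl.
- move=> [G [_ infG ev]]; case: infG => _ lb glb.
  exists [set k | [/\ H k, le 0 k,
       (exists a0, forall a, leD a0 a -> le (vabs (x a - f)) k) &
       exists g, G g /\ le k g]].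
  split; first by move=> k [].
  split; [exact: H0 | by move=> k [] |].
  move=> y Hy yl; apply: glb => // g Gg.
  have [a0 ta] := ev g Gg.
  pose T := fun v => exists a, leD a0 a /\ v = vabs (x a - f).
  have [l [u [_ Hu Tu]]] : order_bounded_in le H T.
    apply: ii.
      by move=> v [a [_ ->]]; apply: H_vabs; apply: HB.
    exists 0, g; split => // v [a [la ->]]; split; [exact: vabs_ge0 | exact: ta].
  set k := meet g (vabs u).
  have k0 : le 0 k := meet_glb (lb g Gg) (vabs_ge0 _).
  have Hk : H k.
    by apply: (H_pos (H_vabs Hu) k0); rewrite vabs_vabs; exact: meet_lbr.
  apply: ltrans (yl k _) (meet_lbl _ _); split => //.
    exists a0 => a la; apply: meet_glb; first exact: ta.
    apply: ltrans (vabs_ge u).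
    by have := (Tu _ (ex_intro _ a (conj la erefl))).2.
  by exists g; split => //; exact: meet_lbl.
by move=> k []...
Qed.

Hypothesis hArch : archimedean le.

Lemma iii_ii : order_embedding le join H -> propii.
Proof.
move=> oe G GH [a [b [_ _ Gab]]].
set c := join (vabs a) (vabs b).
have c0 : le 0 c := ltrans (vabs_ge0 a) (join_ubl _ _).
pose S := fun s => H s /\ le 0 s /\ le s c.
pose D := ({s : V | S s} * nat)%type.
pose leD := fun p q : D => le (sval p.1) (sval q.1) /\ (p.2 <= q.2)%N.
have S0 : S 0 := conj H0 (conj (lrefl 0) c0).
have Sjoin : forall s t, S s -> S t -> S (join s t).
  move=> s t [Hs [s0 sc]] [Ht [t0 tc]].
  have j0 : le 0 (join s t) := ltrans s0 (join_ubl _ _).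
  split; last by split => //; apply: join_lub.
  apply: (H_pos (HD Hs Ht) j0).
  apply: ltrans (vabs_ge _); apply: join_lub.
    by have := laddl s t0; rewrite addr0.
  by have := laddr t s0; rewrite add0r.
have dirD : directed leD.
  split.
  - by exists (exist _ 0 S0, 0%N).
  - by move=> p; split => //; apply: lrefl.
  - move=> p q r [h1 h2] [h3 h4]; split; first exact: ltrans h3.
    exact: leq_trans h4.
  - move=> [[s Ss] n] [[t St] m].
    exists (exist _ (join s t) (Sjoin _ _ Ss St), maxn n m) => /=.
    split; split => /=; [exact: join_ubl | exact: leq_maxl | exact: join_ubr | exact: leq_maxr].
pose x := fun p : D => (p.2.+1%:R : R)^-1 *: sval p.1.
have xpos : forall p, le 0 (x p).
  move=> [[s Ss] n]; have [_ [s0 _]] := Ss; apply: lscale0 => //.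
  by rewrite invr_ge0 ler0n.
have Hx : forall p, H (x p) by move=> [[s Ss] n]; have [Hs _] := Ss; apply: HZ.
have convF : order_conv_in le join setT leD x 0.
  exists (fun y => exists n : nat, y = (n.+1%:R : R)^-1 *: c); split => //.
    split => //.
      move=> g [n ->]; apply: lscale0 => //; by rewrite invr_ge0 ler0n.
    move=> y _ yl.
    have yp : forall n : nat, le (join y 0) ((n.+1%:R : R)^-1 *: c).
      move=> n; apply: join_lub; first by apply: yl; exists n.
      by apply: lscale0 => //; rewrite invr_ge0 ler0n.
    apply: ltrans (join_ubl y 0) _.
    suff -> : join y 0 = 0 by apply: lrefl.
    have e := @hArch _ c (join_ubr y 0). apply: e => -[|n]; first by rewrite mulr0n scale0r.
    have := lscale (n.+1%:R) (ler0n _ _) (yp n).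
    by rewrite scalerA mulfV ?pnatr_eq0 // scale1r.
  move=> g [n ->]; exists (exist _ 0 S0, n) => -[[s Ss] m] [_ /= nm]; have [Hs [s0 sc]] := Ss.
  rewrite subr0 vabs_id; last exact: xpos.
  rewrite /x /=.
  apply: ltrans (lscale _ _ sc) _; first by rewrite invr_ge0 ler0n.
  apply: lscale_coef => //.
  by rewrite lef_pV2 ?posrE ?ltr0Sn // ler_nat.
have [G' [G'H infG' ev']] := (oe D leD dirD x 0 Hx H0).2 convF.
have [u [Hu Su]] : exists u, H u /\ forall s, S s -> le s u.
  case: (pselect (exists k, G' k)) => [[k Gk] | noG].
  - have [[[s0 Ss0] n0] tl] := ev' k Gk.
    exists (n0.+1%:R *: k); split; first exact: HZ (G'H _ Gk).
    move=> s Ss.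
    have lp : leD (exist _ s0 Ss0, n0) (exist _ (join s s0) (Sjoin _ _ Ss Ss0), n0).
      by split => /=; [exact: join_ubr | exact: leqnn].
    have := tl _ lp.
    rewrite subr0 vabs_id; last exact: xpos.
    rewrite /x /= => h.
    have := lscale (n0.+1%:R) (ler0n _ _) h.
    rewrite scalerA mulfV ?pnatr_eq0 // scale1r.
    exact: ltrans (join_ubl _ _).
  - exists 0; split; first exact: H0.
    case: infG' => _ _ glb s [Hs _]; apply: glb => // g Gg.
    by exfalso; apply: noG; exists g.
exists (- u), u; split; [exact: HN | exact: Hu |].
have kle : forall g, G g -> le (vabs g) u.
  move=> g Gg; apply: Su; split; first exact: H_vabs (GH _ Gg).
  split; first exact: vabs_ge0.
  case: (Gab g Gg) => ag gb.
  apply: join_lub.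
    exact: ltrans gb (ltrans (vabs_ge b) (join_ubr _ _)).
  exact: ltrans (lopp ag) (ltrans (vabs_geN a) (join_ubl _ _)).
move=> g Gg; split; last exact: ltrans (vabs_ge g) (kle g Gg).
by have := lopp (ltrans (vabs_geN g) (kle g Gg)); rewrite opprK.
Qed.

End Aux.
Unset Implicit Arguments.

Theorem proposition5p4 (R : realType) (V : lmodType R)
    (le : V -> V -> Prop) (join : V -> V -> V)
    (hVL : vector_lattice le join) (hArch : archimedean le)
    (H : set V) (hH : ideal le join H) :
  (projection_band join H <->
     (forall G : set V, G `<=` H -> order_bounded_in le setT G ->
        order_bounded_in le H G)) /\
  ((forall G : set V, G `<=` H -> order_bounded_in le setT G ->
        order_bounded_in le H G) <->
     order_embedding le join H).
Proof.
split; split.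
- exact: i_ii.
- exact: ii_i.
- exact: ii_iii.
- exact: iii_ii.
Qed.
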